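(* Assume $\mathfrak{d}=\omega_1$, and let $\langle f_\alpha:\alpha<\omega_1\rangle$ be functions in ${}^\omega\omega$ with $f_\alpha<^*f_\beta$ whenever $\alpha<\beta$ and such that for every $g\in{}^\omega\omega$ there is $\alpha$ with $g<^*f_\alpha$. Let $\{P_i:i<\omega\}$ be a partition of $\omega$ into infinite sets, and for $\alpha<\omega_1$ let $Z_\alpha=\{n<\omega:\exists i\,(n\in P_i\text{ and }n>f_\alpha(i))\}$. Let $X$ be the space with underlying set $(\omega\times\omega_1)\cup\{\infty\}$, where all points of $\omega\times\omega_1$ are isolated and a local subbase at $\infty$ consists of the sets $X\setminus(P_i\times\omega_1)$ for $i<\omega$ and $X\setminus(Z_\alpha\times\alpha)$ for $\alpha<\omega_1$. Suppose $U$ is a filter on $\omega$ with dual ideal $I$ such that $P_i\in I$ for all $i<\omega$ and $Z_\alpha\notin I$ for all $\alpha<\omega_1$. Then $X$ is Fréchet and $L$-selective but not $U$-selective.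
   Context: $f<^*g$ means $f(n)<g(n)$ for all but finitely many $n$. A space is Fréchet if whenever $x\in\overline{A}$ there is a sequence in $A$ converging to $x$. $\mathcal{F}(X)$ is the set of nonempty closed subsets of $X$; $\varphi:Y\rightarrow\mathcal{F}(X)$ is lower semicontinuous if for every open $W\subseteq X$, $\{y:\varphi(y)\cap W\neq\emptyset\}$ is open in $Y$. $X$ is $Y$-selective if every lower semicontinuous $\varphi:Y\rightarrow\mathcal{F}(X)$ has a continuous selection $s:Y\rightarrow X$ (i.e., $s(y)\in\varphi(y)$ for all $y$). $X$ is $L$-selective if it is $(\omega+1)$-selective, where $\omega+1$ carries the order topology (a convergent sequence). For a filter $U$ on $\omega$, $Y_U$ is the space on $\omega\cup\{\infty\}$ with points of $\omega$ isolated and neighborhoods of $\infty$ the sets $A\cup\{\infty\}$, $A\in U$; $X$ is $U$-selective if it is $Y_U$-selective. *)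

(* Defs.v *)
From Stdlib Require Import List Arith.

Definition closure {T : Type} (op : (T -> Prop) -> Prop) (A : T -> Prop) (x : T) : Prop :=
  forall V, op V -> V x -> exists y, V y /\ A y.

Definition converges {T : Type} (op : (T -> Prop) -> Prop) (s : nat -> T) (x : T) : Prop :=
  forall V, op V -> V x -> exists N, forall n, N <= n -> V (s n).

Definition frechet {T : Type} (op : (T -> Prop) -> Prop) : Prop :=
  forall (A : T -> Prop) (x : T), closure op A x ->
    exists s : nat -> T, (forall n, A (s n)) /\ converges op s x.

Definition closed {T : Type} (op : (T -> Prop) -> Prop) (C : T -> Prop) : Prop :=
  op (fun x => ~ C x).

Definition into_F {Y X : Type} (opX : (X -> Prop) -> Prop) (phi : Y -> X -> Prop) : Prop :=
  forall y, (exists x, phi y x) /\ closed opX (phi y).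

Definition lower_semicontinuous {Y X : Type} (opY : (Y -> Prop) -> Prop)
  (opX : (X -> Prop) -> Prop) (phi : Y -> X -> Prop) : Prop :=
  forall W, opX W -> opY (fun y => exists x, phi y x /\ W x).

Definition continuous_map {Y X : Type} (opY : (Y -> Prop) -> Prop)
  (opX : (X -> Prop) -> Prop) (s : Y -> X) : Prop :=
  forall W, opX W -> opY (fun y => W (s y)).

Definition selective {Y X : Type} (opY : (Y -> Prop) -> Prop) (opX : (X -> Prop) -> Prop) : Prop :=
  forall phi : Y -> X -> Prop, into_F opX phi -> lower_semicontinuous opY opX phi ->
    exists s : Y -> X, continuous_map opY opX s /\ forall y, phi y (s y).

(* ---------- the space omega+1 (None = omega) with the order topology ---------- *)
Definition omega_plus_one_open (V : option nat -> Prop) : Prop :=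
  V None -> exists N, forall n, N <= n -> V (Some n).

Definition L_selective {X : Type} (opX : (X -> Prop) -> Prop) : Prop :=
  selective omega_plus_one_open opX.

(* ---------- filters on omega and the space Y_U (None = infinity) ---------- *)
Definition filter_on_omega (U : (nat -> Prop) -> Prop) : Prop :=
  U (fun _ => True) /\ ~ U (fun _ => False) /\
  (forall A B : nat -> Prop, U A -> (forall n, A n -> B n) -> U B) /\
  (forall A B : nat -> Prop, U A -> U B -> U (fun n => A n /\ B n)).

Definition in_dual_ideal (U : (nat -> Prop) -> Prop) (A : nat -> Prop) : Prop :=
  U (fun n => ~ A n).

Definition YU_open (U : (nat -> Prop) -> Prop) (V : option nat -> Prop) : Prop :=
  V None -> U (fun n => V (Some n)).

Definition U_selective {X : Type} (U : (nat -> Prop) -> Prop) (opX : (X -> Prop) -> Prop) : Prop :=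
  selective (YU_open U) opX.

(* (W, lt) is (order-isomorphic to) omega_1: an uncountable strict well-order
   all of whose proper initial segments are countable *)
Record is_omega1 (W : Type) (lt : W -> W -> Prop) : Prop := {
  om1_irrefl : forall a, ~ lt a a;
  om1_trans : forall a b c, lt a b -> lt b c -> lt a c;
  om1_total : forall a b, lt a b \/ a = b \/ lt b a;
  om1_wf : well_founded lt;
  om1_uncountable : ~ exists h : W -> nat, forall a b, h a = h b -> a = b;
  om1_segments_countable : forall a, exists h : W -> nat,
      forall b c, lt b a -> lt c a -> h b = h c -> b = c
}.

Definition lt_star (f g : nat -> nat) : Prop :=
  exists N, forall n, N <= n -> f n < g n.

Definition partition_infinite (P : nat -> nat -> Prop) : Prop :=
  (forall i m, exists n, m <= n /\ P i n) /\
  (forall i j n, P i n -> P j n -> i = j) /\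
  (forall n, exists i, P i n).

Definition Zset (P : nat -> nat -> Prop) {W : Type} (f : W -> nat -> nat) (a : W) (n : nat) : Prop :=
  exists i, P i n /\ f a i < n.

(* Points of omega x omega_1 are isolated; a set containing infinity is open iff it
   contains a finite intersection of the subbasic sets
   X \ (P_i x omega_1)  and  X \ (Z_alpha x alpha). *)
Definition X_open {W : Type} (lt : W -> W -> Prop) (f : W -> nat -> nat)
  (P : nat -> nat -> Prop) (V : option (nat * W) -> Prop) : Prop :=
  V None ->
  exists (is : list nat) (als : list W),
    forall (n : nat) (b : W),
      (forall i, In i is -> ~ P i n) ->
      (forall a, In a als -> ~ (Zset P f a n /\ lt b a)) ->
      V (Some (n, b)).

(* Main.v *)
Require Import Defs.
From Stdlib Require Import List Arith Lia Classical ClassicalEpsilon Cantor.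
Import ListNotations.

Lemma choice_fun {A B : Type} (R : A -> B -> Prop) :
  (forall x, exists y, R x y) -> exists g : A -> B, forall x, R x (g x).
Proof.
  intros H. exists (fun x => proj1_sig (constructive_indefinite_description _ (H x))).
  intros x. exact (proj2_sig (constructive_indefinite_description _ (H x))).
Qed.

Lemma lt_star_trans f g h : lt_star f g -> lt_star g h -> lt_star f h.
Proof.
  intros [N1 H1] [N2 H2]. exists (max N1 N2). intros n Hn.
  specialize (H1 n ltac:(lia)). specialize (H2 n ltac:(lia)). lia.
Qed.

Lemma om1_inh W lt : is_omega1 W lt -> exists w : W, True.
Proof.
  intros Hom. apply NNPP. intros Hn. apply (om1_uncountable _ _ Hom).
  exists (fun _ => 0). intros a. exfalso. apply Hn. exists a. exact I.
Qed.

Lemma ub_list W lt : is_omega1 W lt -> forall l : list W, exists b, forall a, In a l -> ~ lt b a.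
Proof.
  intros Hom l. induction l as [|a l IH].
  - destruct (om1_inh _ _ Hom) as [w _]. exists w. intros a [].
  - destruct IH as [b Hb]. destruct (classic (lt b a)) as [Hba|Hba].
    + exists a. intros a' [<-|Ha'].
      * apply (om1_irrefl _ _ Hom).
      * intros Hl. apply (Hb a' Ha'). eapply (om1_trans _ _ Hom); eauto.
    + exists b. intros a' [<-|Ha']; auto.
Qed.

Lemma bound_seq W lt : is_omega1 W lt -> forall s : nat -> W, exists d, forall m, lt (s m) d.
Proof.
  intros Hom s. apply NNPP. intros Hn.
  assert (H1 : forall d, exists m, d = s m \/ lt d (s m)).
  { intros d. apply NNPP. intros H2. apply Hn. exists d. intros m.
    destruct (om1_total _ _ Hom (s m) d) as [H|[H|H]]; auto;
    exfalso; apply H2; exists m; auto. }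
  destruct (choice_fun _ H1) as [mf Hmf].
  destruct (choice_fun _ (fun m => om1_segments_countable _ _ Hom (s m))) as [hs Hhs].
  apply (om1_uncountable _ _ Hom).
  exists (fun w => to_nat (mf w, if excluded_middle_informative (w = s (mf w)) then 0 else S (hs (mf w) w))).
  intros a b Hab. apply to_nat_inj in Hab. injection Hab as E1 E2.
  destruct (excluded_middle_informative (a = s (mf a))) as [Ea|Ea];
  destruct (excluded_middle_informative (b = s (mf b))) as [Eb|Eb]; try discriminate.
  - rewrite Ea, Eb, E1. reflexivity.
  - injection E2 as E2. rewrite <- E1 in E2.
    destruct (Hmf a) as [?|Ha]; [contradiction|].
    destruct (Hmf b) as [?|Hb]; [contradiction|]. rewrite <- E1 in Hb.
    eapply Hhs; eauto.
Qed.

Lemma enum_seg W lt : is_omega1 W lt -> forall d : W, exists e : nat -> W,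
  forall g, lt g d -> exists m, e m = g.
Proof.
  intros Hom d. destruct (om1_segments_countable _ _ Hom d) as [h Hh].
  assert (H : forall m, exists g, (exists g', lt g' d /\ h g' = m) -> lt g d /\ h g = m).
  { intros m. destruct (classic (exists g', lt g' d /\ h g' = m)) as [[g' Hg']|Hn].
    - exists g'. auto.
    - exists d. intros H; contradiction. }
  destruct (choice_fun _ H) as [e He]. exists e. intros g Hg. exists (h g).
  destruct (He (h g)) as [H1 H2]; eauto.
Qed.

Definition basic {W : Type} (lt : W -> W -> Prop) (f : W -> nat -> nat) (P : nat -> nat -> Prop)
  (is : list nat) (als : list W) (p : nat * W) : Prop :=
  (forall i, In i is -> ~ P i (fst p)) /\
  (forall a, In a als -> ~ (Zset P f a (fst p) /\ lt (snd p) a)).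

Lemma in_le_max l i : In i l -> i <= fold_right max 0 l.
Proof. induction l; simpl; [intros []|]. intros [H|H]; subst; try lia. specialize (IHl H); lia. Qed.

Lemma ev_list {A : Type} (Q : A -> nat -> Prop) :
  (forall a, exists K, forall k, K <= k -> Q a k) ->
  forall l, exists K, forall k, K <= k -> forall a, In a l -> Q a k.
Proof.
  intros H l. induction l as [|a l [K IH]].
  - exists 0. intros k _ a [].
  - destruct (H a) as [K' H']. exists (max K K'). intros k Hk a' [<-|Ha].
    + apply H'; lia.
    + apply IH; auto; lia.
Qed.

Fixpoint search (D : nat -> Prop) (m : nat) : nat :=
  match m with
  | 0 => 0
  | S m' => if excluded_middle_informative (D m) then m else search D m'
  end.

Lemma search_spec D m : (D (search D m) \/ search D m = 0) /\
  (forall j, j <= m -> D j -> j <= search D m).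
Proof.
  induction m as [|m [IH1 IH2]]; simpl.
  - split; [auto| intros; lia].
  - destruct (excluded_middle_informative (D (S m))) as [Hd|Hd].
    + split; [auto| intros; lia].
    + split; auto. intros j Hj Dj. destruct (Nat.eq_dec j (S m)); [subst; contradiction|].
      apply IH2; auto; lia.
Qed.

Fixpoint bigmax (h : nat -> nat) (m : nat) : nat :=
  match m with 0 => 0 | S m' => max (h m') (bigmax h m') end.

Lemma bigmax_spec h m k : k < m -> h k <= bigmax h m.
Proof. induction m; simpl; intros; [lia|]. destruct (Nat.eq_dec k m); subst; [lia|].
  specialize (IHm ltac:(lia)); lia. Qed.

Lemma basic_ne W lt f P : is_omega1 W lt -> partition_infinite P ->
  forall is als, exists p, basic lt f P is als p.
Proof.
  intros Hom [Hp1 [Hp2 Hp3]] is als.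
  destruct (ub_list _ _ Hom als) as [b Hb].
  destruct (Hp1 (S (fold_right max 0 is)) 0) as [n [_ Hn]].
  exists (n, b). split; simpl.
  - intros i Hi Pi. pose proof (Hp2 _ _ _ Pi Hn). pose proof (in_le_max _ _ Hi). lia.
  - intros a Ha [_ Hl]. exact (Hb a Ha Hl).
Qed.

Lemma basic_of_singles W lt f P (y : nat -> nat * W) :
  (forall i, exists K, forall k, K <= k -> ~ P i (fst (y k))) ->
  (forall a, exists K, forall k, K <= k -> ~ (Zset P f a (fst (y k)) /\ lt (snd (y k)) a)) ->
  forall is als, exists K, forall k, K <= k -> basic lt f P is als (y k).
Proof.
  intros H1 H2 is als.
  destruct (ev_list _ H1 is) as [K1 HK1].
  destruct (ev_list _ H2 als) as [K2 HK2].
  exists (max K1 K2). intros k Hk. split.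
  - intros i Hi. apply HK1; auto; lia.
  - intros a Ha. apply HK2; auto; lia.
Qed.

Lemma star W lt f P (A : nat -> nat * W -> Prop) :
  is_omega1 W lt ->
  (forall a b, lt a b -> lt_star (f a) (f b)) ->
  (forall g, exists a, lt_star g (f a)) ->
  (forall is als, exists K, forall k, K <= k -> exists p, A k p /\ basic lt f P is als p) ->
  (forall k, exists p, A k p) ->
  exists y : nat -> nat * W, (forall k, A k (y k)) /\
    forall is als, exists K, forall k, K <= k -> basic lt f P is als (y k).
Proof.
  intros Hom Hmono Hdom HA Hne.
  destruct (om1_inh _ _ Hom) as [w0 _].
  set (bnd := fun k n => exists c, forall b, A k (n,b) -> lt b c).
  assert (Hd : exists d, forall k n b, bnd k n -> A k (n,b) -> lt b d).
  { assert (Hc : forall k n, exists c, bnd k n -> forall b, A k (n,b) -> lt b c).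
    { intros k n. destruct (classic (bnd k n)) as [[c Hc]|Hn].
      - exists c. auto.
      - exists w0. intros; contradiction. }
    assert (Hc' : forall k, exists ck : nat -> W, forall n, bnd k n -> forall b, A k (n,b) -> lt b (ck n)).
    { intros k. exact (choice_fun _ (Hc k)). }
    destruct (choice_fun _ Hc') as [c Hcs].
    destruct (choice_fun _ (fun k => bound_seq _ _ Hom (c k))) as [dk Hdk].
    destruct (bound_seq _ _ Hom dk) as [d Hd].
    exists d. intros k n b Hb Ha.
    apply (om1_trans _ _ Hom) with (dk k); auto.
    apply (om1_trans _ _ Hom) with (c k n); eauto. }
  destruct Hd as [d Hd].
  destruct (enum_seg _ _ Hom d) as [e He].
  set (R := fun j (p : nat * W) =>
    (forall i, i < j -> ~ P i (fst p)) /\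
    ~ (Zset P f d (fst p) /\ lt (snd p) d) /\
    (forall m, m < j -> ~ (Zset P f (e m) (fst p) /\ lt (snd p) (e m)))).
  assert (Rmono : forall j j' p, j <= j' -> R j' p -> R j p).
  { intros j j' p Hj [H1 [H2 H3]]. split; [|split]; auto.
    - intros i Hi. apply H1. lia.
    - intros m Hm. apply H3. lia. }
  assert (HR : forall j, exists K, forall k, K <= k -> exists p, A k p /\ R j p).
  { intros j. destruct (HA (seq 0 j) (d :: map e (seq 0 j))) as [K HK].
    exists K. intros k Hk. destruct (HK k Hk) as [p [Ap [B1 B2]]].
    exists p. split; auto. split; [|split].
    - intros i Hi. apply B1. apply in_seq. lia.
    - apply B2. left; auto.
    - intros m Hm. apply B2. right. apply in_map. apply in_seq. lia. }
  destruct (choice_fun _ HR) as [Kf HKf].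
  set (D := fun k j => exists p, A k p /\ R j p).
  set (q := fun k => search (D k) k).
  assert (Hx : forall k, exists p, A k p /\ (D k (q k) -> R (q k) p)).
  { intros k. destruct (classic (D k (q k))) as [[p [Ap Rp]]|Hn].
    - exists p; auto.
    - destruct (Hne k) as [p Ap]. exists p. split; auto. intros; contradiction. }
  destruct (choice_fun _ Hx) as [x Hxs].
  assert (Px : forall j k, max (Kf j) j <= k -> R j (x k)).
  { intros j k Hk. assert (Dj : D k j) by (apply HKf; lia).
    destruct (search_spec (D k) k) as [S1 S2].
    assert (Hjq : j <= q k) by (apply S2; auto; lia).
    assert (Dq : D k (q k)).
    { destruct S1 as [S1|S1]; auto. unfold q. rewrite S1.
      replace 0 with j by (unfold q in Hjq; lia). auto. }
    apply Rmono with (q k); auto. apply (proj2 (Hxs k)). auto. }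
  assert (HT : forall i, exists K, forall k, K <= k -> ~ P i (fst (x k))).
  { intros i. exists (max (Kf (S i)) (S i)). intros k Hk.
    apply (Px (S i) k Hk). lia. }
  destruct (choice_fun _ HT) as [T HTs].
  set (g := fun i => bigmax (fun k => fst (x k)) (T i)).
  assert (Hg : forall i k, P i (fst (x k)) -> fst (x k) <= g i).
  { intros i k Hp. unfold g. apply (bigmax_spec (fun k => fst (x k))).
    destruct (le_lt_dec (T i) k) as [H|H]; auto. exfalso. exact (HTs i k H Hp). }
  assert (HTb : forall M k i, bigmax T M <= k -> i < M -> ~ P i (fst (x k))).
  { intros M k i Hk Hi. apply HTs. pose proof (bigmax_spec T M i Hi). lia. }
  destruct (Hdom g) as [a1 [M1 HM1]].
  assert (Hy : forall k, exists p, A k p /\ fst p = fst (x k) /\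
     (~ bnd k (fst (x k)) -> ~ lt (snd p) a1) /\ (bnd k (fst (x k)) -> p = x k)).
  { intros k. destruct (classic (bnd k (fst (x k)))) as [Hb|Hb].
    - exists (x k). split; [apply Hxs|]. split; [reflexivity|]. split; [intros; contradiction|auto].
    - assert (Hex : exists b, A k (fst (x k), b) /\ ~ lt b a1).
      { apply NNPP. intros Hn. apply Hb. exists a1. intros b Ab.
        apply NNPP. intros Hl. apply Hn. exists b. auto. }
      destruct Hex as [b [Ab Hl]]. exists (fst (x k), b). simpl.
      split; [exact Ab|]. split; [reflexivity|]. split; [auto|intros; contradiction]. }
  destruct (choice_fun _ Hy) as [y Hys].
  exists y. split; [intros k; apply (Hys k)|].
  apply basic_of_singles.
  - intros i. exists (T i). intros k Hk. rewrite (proj1 (proj2 (Hys k))). auto.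
  - intros a.
    assert (Khigh : exists K, forall k, K <= k -> ~ bnd k (fst (x k)) ->
               ~ (Zset P f a (fst (y k)) /\ lt (snd (y k)) a)).
    { destruct (classic (lt a1 a)) as [Ha|Ha].
      - destruct (Hmono _ _ Ha) as [M2 HM2].
        exists (bigmax T (max M1 M2)). intros k Hk Hb [[i [Pi Hi]] _].
        rewrite (proj1 (proj2 (Hys k))) in Pi, Hi.
        destruct (le_lt_dec (max M1 M2) i) as [Hi'|Hi'].
        + pose proof (Hg i k Pi). specialize (HM1 i ltac:(lia)). specialize (HM2 i ltac:(lia)). lia.
        + exact (HTb _ _ _ Hk Hi' Pi).
      - exists 0. intros k _ Hb [_ Hl].
        pose proof (proj1 (proj2 (proj2 (Hys k))) Hb) as Hn.
        destruct (om1_total _ _ Hom (snd (y k)) a1) as [H|[H|H]].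
        + contradiction.
        + subst. contradiction.
        + apply Ha. eapply (om1_trans _ _ Hom); eauto. }
    assert (Klow : exists K, forall k, K <= k -> bnd k (fst (x k)) ->
               ~ (Zset P f a (fst (x k)) /\ lt (snd (x k)) a)).
    { assert (Hlow : forall k, max (Kf 0) 0 <= k -> bnd k (fst (x k)) ->
                 lt (snd (x k)) d /\ ~ Zset P f d (fst (x k))).
      { intros k Hk Hb. assert (Hl : lt (snd (x k)) d).
        { apply (Hd k (fst (x k)) (snd (x k)) Hb). rewrite <- surjective_pairing. apply Hxs. }
        split; auto. intros Hz. apply (proj1 (proj2 (Px 0 k Hk))). auto. }
      destruct (om1_total _ _ Hom a d) as [Ha|[Ha|Ha]].
      - destruct (He a Ha) as [m Hm].
        exists (max (max (Kf (S m)) (S m)) (max (Kf 0) 0)). intros k Hk Hb.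
        rewrite <- Hm. apply (proj2 (proj2 (Px (S m) k ltac:(lia)))). lia.
      - subst a. exists (max (Kf 0) 0). intros k Hk Hb. apply (Px 0 k Hk).
      - destruct (Hmono _ _ Ha) as [M3 HM3].
        exists (max (bigmax T M3) (max (Kf 0) 0)). intros k Hk Hb [[i [Pi Hi]] _].
        destruct (Hlow k ltac:(lia) Hb) as [_ Hz].
        destruct (le_lt_dec M3 i) as [Hi'|Hi'].
        + apply Hz. exists i. split; auto. specialize (HM3 i Hi'). 
          destruct (le_lt_dec (fst (x k)) (f d i)); [|auto]. lia.
        + exact (HTb M3 k i ltac:(lia) Hi' Pi). }
    destruct Khigh as [K1 HK1]. destruct Klow as [K2 HK2].
    exists (max K1 K2). intros k Hk.
    destruct (classic (bnd k (fst (x k)))) as [Hb|Hb].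
    + rewrite (proj2 (proj2 (proj2 (Hys k))) Hb). apply HK2; auto; lia.
    + apply HK1; auto; lia.
Qed.

Lemma open_of_basic W lt f P (V : option (nat * W) -> Prop) :
  X_open lt f P V -> V None -> exists is als, forall p, basic lt f P is als p -> V (Some p).
Proof.
  intros HV HN. destruct (HV HN) as [is [als H]]. exists is, als.
  intros [n b] [B1 B2]. apply H; auto.
Qed.

Lemma part_frechet W lt f P :
  is_omega1 W lt ->
  (forall a b, lt a b -> lt_star (f a) (f b)) ->
  (forall g : nat -> nat, exists a, lt_star g (f a)) ->
  partition_infinite P -> frechet (X_open lt f P).
Proof.
  intros Hom Hmono Hdom Hpart A x Hcl.
  destruct (classic (A x)) as [Ax|nAx].
  { exists (fun _ => x). split; auto. intros V _ Vx. exists 0; auto. }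
  destruct x as [p|].
  { exfalso. destruct (Hcl (fun z => z = Some p)) as [z [-> Az]]; auto.
    intros H; discriminate. }
  assert (HA : forall is als, exists K, forall k, K <= k -> exists p, A (Some p) /\ basic lt f P is als p).
  { intros is als. exists 0. intros k _.
    destruct (Hcl (fun z => match z with None => True | Some p => basic lt f P is als p end)) as [z [Vz Az]].
    - intros _. exists is, als. intros n b H1 H2. split; auto.
    - exact I.
    - destruct z as [p|]; [exists p; auto| contradiction]. }
  destruct (star W lt f P (fun _ p => A (Some p)) Hom Hmono Hdom HA) as [y [Hy1 Hy2]].
  { intros k. destruct (HA [] []) as [K HK]. destruct (HK (max k K) ltac:(lia)) as [p [Ap _]].
    exists p; auto. }
  exists (fun k => Some (y k)). split; auto.
  intros V HV VN. destruct (open_of_basic _ _ _ _ _ HV VN) as [is [als H]].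
  destruct (Hy2 is als) as [K HK]. exists K. intros n Hn. apply H, HK; auto.
Qed.

Lemma part_L W lt f P :
  is_omega1 W lt ->
  (forall a b, lt a b -> lt_star (f a) (f b)) ->
  (forall g : nat -> nat, exists a, lt_star g (f a)) ->
  partition_infinite P -> L_selective (X_open lt f P).
Proof.
  intros Hom Hmono Hdom Hpart phi HF Hlsc.
  destruct (om1_inh _ _ Hom) as [w0 _].
  assert (Hne : forall y, exists x, phi y x) by (intros y; apply (HF y)).
  clear HF.
  destruct (classic (exists p, phi None (Some p))) as [[p Hp]|Hnp].
  - assert (HW : X_open lt f P (fun x => x = Some p)) by (intros H; discriminate).
    destruct (Hlsc _ HW) as [N HN]; [exists (Some p); auto|].
    destruct (choice_fun _ Hne) as [c Hc].
    exists (fun y => match y with None => Some p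
                    | Some k => if N <=? k then Some p else c (Some k) end).
    split.
    + intros V HV HVp. exists N. intros n Hn.
      replace (N <=? n) with true by (symmetry; apply Nat.leb_le; auto). auto.
    + intros [k|]; auto. destruct (N <=? k) eqn:E; auto.
      apply Nat.leb_le in E. destruct (HN k E) as [z [Hz ->]]. auto.
  - assert (HN0 : phi None None).
    { destruct (Hne None) as [[p|] Hx]; auto. exfalso; apply Hnp; eauto. }
    set (A := fun k p => phi (Some k) None \/ phi (Some k) (Some p)).
    assert (HA : forall is als, exists K, forall k, K <= k -> exists p, A k p /\ basic lt f P is als p).
    { intros is als.
      set (V := fun z => match z with None => True | Some p => basic lt f P is als p end).
      assert (HV : X_open lt f P V).
      { intros _. exists is, als. intros n b H1 H2. split; auto. }
      destruct (Hlsc V HV) as [N HN]; [exists None; split; [auto|exact I]|].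
      exists N. intros k Hk. destruct (HN k Hk) as [[p|] [H1 H2]].
      - exists p. split; [right; auto| auto].
      - destruct (basic_ne _ _ f _ Hom Hpart is als) as [p Hp]. exists p. split; [left|]; auto. }
    destruct (star W lt f P A Hom Hmono Hdom HA) as [y [Hy1 Hy2]].
    { intros k. destruct (Hne (Some k)) as [[p|] Hx].
      - exists p. right; auto.
      - exists (0, w0). left; auto. }
    exists (fun z => match z with None => None
                    | Some k => if excluded_middle_informative (phi (Some k) None) then None
                                else Some (y k) end).
    split.
    + intros V HV HVN. destruct (open_of_basic _ _ _ _ _ HV HVN) as [is [als H]].
      destruct (Hy2 is als) as [K HK]. exists K. intros n Hn.
      destruct (excluded_middle_informative (phi (Some n) None)); auto.
    + intros [k|]; auto.
      destruct (excluded_middle_informative (phi (Some k) None)) as [H|H]; auto.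
      destruct (Hy1 k); [contradiction|auto].
Qed.

Lemma part_notU W lt f P U :
  is_omega1 W lt -> partition_infinite P -> filter_on_omega U ->
  (forall i, in_dual_ideal U (P i)) ->
  (forall a, ~ in_dual_ideal U (Zset P f a)) ->
  ~ U_selective U (X_open lt f P).
Proof.
  intros Hom [Hp1 [Hp2 Hp3]] [UT [UF [Umono Uint]]] HPi HZ Hsel.
  destruct (om1_inh _ _ Hom) as [w0 _].
  set (phi := fun (y : option nat) (x : option (nat * W)) =>
    match y with None => x = None | Some n => exists b, x = Some (n, b) end).
  destruct (Hsel phi) as [s [Hcont Hs]].
  - intros [n|]; split.
    + exists (Some (n, w0)). simpl. eauto.
    + intros _. destruct (Hp3 n) as [i Hi]. exists [i], []. intros m b H1 _ [b' Hb'].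
      injection Hb' as -> _. apply (H1 i); simpl; auto.
    + exists None. reflexivity.
    + intros H. exfalso. apply H. reflexivity.
  - intros V HV [x [Hx Vx]]. simpl in Hx. subst x.
    destruct (HV Vx) as [is [als H]].
    destruct (ub_list _ _ Hom als) as [b Hb].
    assert (Hint : forall l, U (fun n => forall i, In i l -> ~ P i n)).
    { induction l as [|i l IH].
      - apply Umono with (fun _ => True); [exact UT|]. intros n _ i [].
      - apply Umono with (fun n => ~ P i n /\ forall i, In i l -> ~ P i n).
        + apply Uint; auto. apply HPi.
        + intros n [H1 H2] i' [<-|Hi']; auto. }
    apply Umono with (fun n => forall i, In i is -> ~ P i n); auto.
    intros n Hn. exists (Some (n, b)). split; [exists b; auto|].
    apply H; auto. intros a Ha [_ Hl]. exact (Hb a Ha Hl).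
  - assert (Hsig : forall n, exists b, s (Some n) = Some (n, b)) by (intros n; apply (Hs (Some n))).
    destruct (choice_fun _ Hsig) as [sg Hsg].
    destruct (bound_seq _ _ Hom sg) as [d Hd].
    set (V := fun x : option (nat * W) => match x with None => True
                  | Some (m, b) => ~ (Zset P f d m /\ lt b d) end).
    assert (HV : X_open lt f P V).
    { intros _. exists [], [d]. intros n b _ H. apply H. left; auto. }
    assert (HsN : s None = None) by apply (Hs None).
    pose proof (Hcont V HV) as HU. unfold YU_open in HU.
    rewrite HsN in HU. specialize (HU I).
    apply (HZ d). unfold in_dual_ideal.
    apply Umono with (fun n => V (s (Some n))); auto.
    intros n. rewrite Hsg. simpl. intros H Hz. apply H. split; auto.
Qed.

Theorem mainTheorem3 (W : Type) (lt : W -> W -> Prop) (f : W -> nat -> nat)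
  (P : nat -> nat -> Prop) (U : (nat -> Prop) -> Prop) :
  is_omega1 W lt ->
  (forall a b, lt a b -> lt_star (f a) (f b)) ->
  (forall g : nat -> nat, exists a, lt_star g (f a)) ->
  partition_infinite P ->
  filter_on_omega U ->
  (forall i, in_dual_ideal U (P i)) ->
  (forall a, ~ in_dual_ideal U (Zset P f a)) ->
  frechet (X_open lt f P) /\ L_selective (X_open lt f P) /\ ~ U_selective U (X_open lt f P).
Proof.
  intros Hom Hmono Hdom Hpart HU HP HZ.
  split; [|split].
  - apply part_frechet; auto.
  - apply part_L; auto.
  - apply part_notU; auto.
Qed.
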